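(* For the amalgam $\Gamma=G_0*_HG_1$ defined below, $K_0=H(0)$, $K_1=H(1)$, and $\ker\Gamma=K_0\cap K_1=H(0)\cap H(1)=\{e\}$.
   Context: Definition of $\Gamma$: write $\oplus$ for addition mod $2$. Let $H$ be the group with generators $h(i_1,\dots,i_n)$, one for each $n\ge1$ and $(i_1,\dots,i_n)\in\{0,1\}^n$, subject to $h(i_1,\dots,i_n)^2=e$ and, for sequences $(i_1,\dots,i_k)$, $(j_1,\dots,j_n)$ with $n\ge k$: $h(i_1,\dots,i_k)h(j_1,\dots,j_n)h(i_1,\dots,i_k)=h(j_1,\dots,j_k,j_{k+1}\oplus1,j_{k+2},\dots,j_n)$ if $n>k$ and $i_\ell=j_\ell$ for $1\le\ell\le k$, and $=h(j_1,\dots,j_n)$ otherwise. Let $\Gamma$ be generated by the $h$'s and $g_0,g_1$ with the relations of $H$ plus $g_0^2=g_1^2=e$, $(g_0h(1))^3=e$, $(g_1h(0))^3=e$, and for all $n\ge2$, $i_3,\dots,i_n\in\{0,1\}$: $g_0h(1,0,i_3,\dots,i_n)g_0=h(0,i_3,\dots,i_n)$, $g_0h(1,1,i_3,\dots,i_n)g_0=h(1,1,i_3,\dots,i_n)$, $g_1h(0,0,i_3,\dots,i_n)g_1=h(0,0,i_3,\dots,i_n)$, $g_1h(0,1,i_3,\dots,i_n)g_1=h(1,i_3,\dots,i_n)$. With $H\le\Gamma$ the subgroup generated by the $h$'s, $G_0=\langle H\cup\{g_0\}\rangle$, $G_1=\langle H\cup\{g_1\}\rangle$, one has $\Gamma=G_0*_HG_1$.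 For $j\in\{0,1\}$, $H(j)$ is the subgroup of $H$ generated by all $h(j,i_2,\dots,i_n)$, $n\ge1$, $i_2,\dots,i_n\in\{0,1\}$. For an amalgam $G_0*_HG_1$: for $j=0,1$ and $k\ge1$ let $T_{j,k}=\{x_0x_1\cdots x_{k-1}: x_i\in G_{i+j\bmod 2}\setminus H\}$, $T_{j,0}=H$, $C_{j,k}=\bigcap_{g\in T_{j,k}}gHg^{-1}$, $K_j=\bigcap_{k\ge0}C_{j,k}$, and $\ker\Gamma=\bigcap_{g\in\Gamma}gHg^{-1}$. *)

(* Defs.v *)
From Stdlib Require Import List Arith Bool.
Import ListNotations.

Record Grp := {
  car :> Type;
  gmul : car -> car -> car;
  ginv : car -> car;
  gone : car;
  gmulA : forall a b c, gmul a (gmul b c) = gmul (gmul a b) c;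
  gmul1 : forall a, gmul gone a = a;
  gmulV : forall a, gmul (ginv a) a = gone
}.

Arguments gmul {g} _ _.
Arguments ginv {g} _.
Arguments gone {g}.

Inductive gen (G : Grp) (S : G -> Prop) : G -> Prop :=
| gen_one : gen G S gone
| gen_base : forall x, S x -> gen G S x
| gen_mul : forall x y, gen G S x -> gen G S y -> gen G S (gmul x y)
| gen_inv : forall x, gen G S x -> gen G S (ginv x).

(* flip_at k l : replace the (k+1)-th entry (1-indexed) of l by its negation,
   i.e. j_{k+1} |-> j_{k+1} (+) 1 *)
Fixpoint flip_at (k : nat) (l : list bool) : list bool :=
  match k, l with
  | O, b :: t => negb b :: t
  | S k', b :: t => b :: flip_at k' t
  | _, [] => []
  end.

(* Sequences (i_1..i_n) in {0,1}^n, n>=1, are nonempty lists of booleans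
   (false = 0, true = 1). *)
Definition rels (G : Grp) (h : list bool -> G) (g0 g1 : G) : Prop :=
  (forall s, s <> [] -> gmul (h s) (h s) = gone) /\
  (forall i j, i <> [] -> length i <= length j ->
     ((length i < length j /\ firstn (length i) j = i) ->
        gmul (gmul (h i) (h j)) (h i) = h (flip_at (length i) j)) /\
     (~ (length i < length j /\ firstn (length i) j = i) ->
        gmul (gmul (h i) (h j)) (h i) = h j)) /\
  gmul g0 g0 = gone /\ gmul g1 g1 = gone /\
  gmul (gmul (gmul g0 (h [true])) (gmul g0 (h [true]))) (gmul g0 (h [true])) = gone /\
  gmul (gmul (gmul g1 (h [false])) (gmul g1 (h [false]))) (gmul g1 (h [false])) = gone /\
  (forall t, gmul (gmul g0 (h (true :: false :: t))) g0 = h (false :: t)) /\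
  (forall t, gmul (gmul g0 (h (true :: true :: t))) g0 = h (true :: true :: t)) /\
  (forall t, gmul (gmul g1 (h (false :: false :: t))) g1 = h (false :: false :: t)) /\
  (forall t, gmul (gmul g1 (h (false :: true :: t))) g1 = h (true :: t)).

(* (Gamma, h, g0, g1) is the group presented by the generators and relations:
   the relations hold, the generators generate, and any assignment in any group
   satisfying the relations extends to a homomorphism. *)
Definition is_presented (Gm : Grp) (h : list bool -> Gm) (g0 g1 : Gm) : Prop :=
  rels Gm h g0 g1 /\
  (forall x : Gm, gen Gm (fun y => (exists s, s <> [] /\ y = h s) \/ y = g0 \/ y = g1) x) /\
  (forall (G : Grp) (h' : list bool -> G) (g0' g1' : G), rels G h' g0' g1' ->
     exists f : Gm -> G,
       (forall a b, f (gmul a b) = gmul (f a) (f b)) /\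
       (forall s, s <> [] -> f (h s) = h' s) /\ f g0 = g0' /\ f g1 = g1').

Section Amalgam.
Variables (Gm : Grp) (h : list bool -> Gm) (g0 g1 : Gm).

(* H = <h's>,  G_0 = <H u {g0}>,  G_1 = <H u {g1}>  (false = index 0) *)
Definition Hsub : Gm -> Prop := gen Gm (fun y => exists s, s <> [] /\ y = h s).
Definition Gsub (j : bool) : Gm -> Prop :=
  gen Gm (fun y => (exists s, s <> [] /\ y = h s) \/ y = (if j then g1 else g0)).

Definition Hj (j : bool) : Gm -> Prop := gen Gm (fun y => exists t, y = h (j :: t)).

Fixpoint Talt (b : bool) (k : nat) (y : Gm) : Prop :=
  match k with
  | O => y = gone
  | S k' => exists x z, Gsub b x /\ ~ Hsub x /\ Talt (negb b) k' z /\ y = gmul x z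
  end.

Definition T (j : bool) (k : nat) : Gm -> Prop :=
  match k with O => Hsub | _ => Talt j k end.

Definition in_conjH (g y : Gm) : Prop := exists x, Hsub x /\ y = gmul (gmul g x) (ginv g).

Definition C (j : bool) (k : nat) (y : Gm) : Prop := forall g, T j k g -> in_conjH g y.
Definition K (j : bool) (y : Gm) : Prop := forall k, C j k y.
Definition kerG (y : Gm) : Prop := forall g : Gm, in_conjH g y.

End Amalgam.

(* Main.v *)
Require Import Defs.
From Stdlib Require Import List Arith Bool Lia Classical FunctionalExtensionality ProofIrrelevance.
Import ListNotations.


Section GrpTh.
Variable G : Grp.
Local Notation "a * b" := (@gmul G a b).
Local Notation "1" := (@gone G).

Lemma mulA' (a b c : G) : a * (b * c) = a * b * c. Proof. apply gmulA. Qed.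
Lemma mul1l (a : G) : 1 * a = a. Proof. apply gmul1. Qed.
Lemma mulVl (a : G) : ginv a * a = 1. Proof. apply gmulV. Qed.

Lemma mulVr (a : G) : a * ginv a = 1.
Proof.
  transitivity (ginv (ginv a) * ginv a * (a * ginv a)).
  rewrite mulVl, mul1l. reflexivity.
  rewrite <- mulA', (mulA' (ginv a) a), mulVl, mul1l. apply mulVl.
Qed.

Lemma mul1r (a : G) : a * 1 = a.
Proof. rewrite <- (mulVl a), mulA', mulVr, mul1l. reflexivity. Qed.

Lemma mulKl (a b : G) : ginv a * (a * b) = b.
Proof. rewrite mulA', mulVl, mul1l. reflexivity. Qed.
Lemma mulKr (a b : G) : a * (ginv a * b) = b.
Proof. rewrite mulA', mulVr, mul1l. reflexivity. Qed.

Lemma mul_cancel_l (a b c : G) : a * b = a * c -> b = c.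
Proof. intro H. rewrite <- (mulKl a b), H, mulKl. reflexivity. Qed.

Lemma inv_uniq (a b : G) : a * b = 1 -> ginv a = b.
Proof. intro H. apply (mul_cancel_l a). rewrite mulVr, H. reflexivity. Qed.

Lemma invinv (a : G) : ginv (ginv a) = a.
Proof. apply inv_uniq. apply mulVl. Qed.

Lemma inv_mul (a b : G) : ginv (a * b) = ginv b * ginv a.
Proof. apply inv_uniq. rewrite <- mulA', (mulA' b), mulVr, mul1l, mulVr. reflexivity. Qed.

Lemma inv1 : ginv (1:G) = 1.
Proof. apply inv_uniq. apply mul1l. Qed.

Lemma inv_invol (a : G) : a * a = 1 -> ginv a = a.
Proof. apply inv_uniq. Qed.

Lemma comm_of_conj (a b : G) : a * a = 1 -> a * b * a = b -> a * b = b * a.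
Proof. intros H1 H2. rewrite <- H2 at 2. rewrite <- !mulA', H1, mul1r. reflexivity. Qed.

Fixpoint prod (l : list G) : G := match l with [] => 1 | a :: l' => a * prod l' end.

Lemma prod_app l1 l2 : prod (l1 ++ l2) = prod l1 * prod l2.
Proof. induction l1; simpl. rewrite mul1l; auto. rewrite IHl1, mulA'. auto. Qed.

Lemma gen_list (S : G -> Prop) : (forall s, S s -> s * s = 1) ->
  forall x, gen G S x -> exists l, Forall S l /\ x = prod l.
Proof.
  intros Hs x Hx. induction Hx.
  - exists []. auto.
  - exists [x]. simpl. rewrite mul1r. auto.
  - destruct IHHx1 as [l1 [F1 E1]], IHHx2 as [l2 [F2 E2]].
    exists (l1 ++ l2). split. apply Forall_app; auto. rewrite prod_app; subst; auto.
  - destruct IHHx as [l [F E]]. exists (rev l). split. apply Forall_rev; auto.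
    subst. clear Hx. induction l; simpl. apply inv1.
    inversion F; subst. rewrite inv_mul, prod_app, IHl by auto. simpl.
    rewrite mul1r, inv_invol; auto.
Qed.

Lemma list_gen (S : G -> Prop) l : Forall S l -> gen G S (prod l).
Proof. induction 1; simpl. constructor. apply gen_mul; auto. apply gen_base; auto. Qed.

Lemma gen_mono (S S' : G -> Prop) : (forall y, S y -> gen G S' y) -> forall x, gen G S x -> gen G S' x.
Proof. intros H x Hx. induction Hx; [constructor|auto|apply gen_mul; auto|apply gen_inv; auto]. Qed.

Lemma conj_gen (S S' : G -> Prop) (q : G) :
  (forall y, S y -> gen G S' (ginv q * y * q)) ->
  forall x, gen G S x -> gen G S' (ginv q * x * q).
Proof.
  intros H x Hx. induction Hx.
  - rewrite mul1r, mulVl. apply gen_one.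
  - auto.
  - replace (ginv q * (x * y) * q) with ((ginv q * x * q) * (ginv q * y * q)).
    apply gen_mul; auto.
    rewrite <- !mulA'. f_equal. f_equal. rewrite mulKr. reflexivity.
  - replace (ginv q * ginv x * q) with (ginv (ginv q * x * q)). apply gen_inv; auto.
    rewrite !inv_mul, invinv, mulA'. reflexivity.
Qed.

Lemma comm_prod (a : G) l : Forall (fun b => a * b = b * a) l -> a * prod l = prod l * a.
Proof.
  induction 1; simpl. rewrite mul1l, mul1r; auto.
  rewrite mulA', H, <- !mulA', IHForall. auto.
Qed.

End GrpTh.


Definition St := nat -> bool.
Definition scons (b : bool) (w : St) : St := fun n => match n with 0 => b | S m => w m end.
Definition stl (w : St) : St := fun n => w (S n).

Lemma scons_eta (x : St) : scons (x 0) (stl x) = x.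
Proof. apply functional_extensionality. intros [|n]; reflexivity. Qed.

Fixpoint hact (s : list bool) (x : St) : St :=
  match s with
  | [] => scons (negb (x 0)) (stl x)
  | b :: s' => if Bool.eqb b (x 0) then scons (x 0) (hact s' (stl x)) else x
  end.

Definition gact (j : bool) (x : St) : St :=
  if Bool.eqb (x 0) j then scons (negb j) (scons j (stl x))
  else if Bool.eqb (x 1) j then scons j (stl (stl x)) else x.

Lemma hact_invol s x : hact s (hact s x) = x.
Proof.
  revert x; induction s as [|b s IH]; intro x; simpl.
  - apply functional_extensionality; intros [|n]; simpl; auto. apply negb_involutive.
  - destruct (Bool.eqb b (x 0)) eqn:E; simpl.
    + rewrite E. unfold stl at 1. simpl. change (fun n => hact s (stl x) n) with (hact s (stl x)).
      rewrite IH. apply scons_eta.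
    + rewrite E. auto.
Qed.

Lemma hact_head s x : s <> [] -> hact s x 0 = x 0.
Proof. destruct s; simpl. congruence. intros _. destruct (Bool.eqb b (x 0)); reflexivity. Qed.

Lemma gact_invol j x : gact j (gact j x) = x.
Proof.
  unfold gact. destruct j, (x 0) eqn:E0, (x 1) eqn:E1; simpl;
  rewrite ?E0, ?E1; simpl; try reflexivity;
  apply functional_extensionality; intros [|[|n]]; simpl; auto.
Qed.

Record perm := Perm { fw : St -> St; bw : St -> St;
  fb : forall x, fw (bw x) = x; bf : forall x, bw (fw x) = x }.

Lemma perm_eq (a b : perm) : (forall x, fw a x = fw b x) -> a = b.
Proof.
  intro H. assert (Hf : fw a = fw b) by (apply functional_extensionality; auto).
  assert (Hb : bw a = bw b).
  { apply functional_extensionality. intro x.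
    rewrite <- (fb b x) at 1. rewrite <- Hf. apply bf. }
  destruct a, b; simpl in *. subst. f_equal; apply proof_irrelevance.
Qed.

Definition pmul (a b : perm) : perm.
Proof.
  refine (Perm (fun x => fw a (fw b x)) (fun x => bw b (bw a x)) _ _);
  intro x; rewrite ?fb, ?bf; auto.
Defined.
Definition pinv (a : perm) : perm := Perm (bw a) (fw a) (bf a) (fb a).
Definition pid : perm := Perm (fun x => x) (fun x => x) (fun x => eq_refl) (fun x => eq_refl).

Definition PG : Grp.
Proof.
  refine (Build_Grp perm pmul pinv pid _ _ _); intros; apply perm_eq; simpl; auto.
  apply bf.
Defined.

Definition invp (f : St -> St) (H : forall x, f (f x) = x) : perm := Perm f f H H.
Definition mh (s : list bool) : PG := invp (hact s) (hact_invol s).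
Definition mg (j : bool) : PG := invp (gact j) (gact_invol j).


Lemma scons_0 c w : scons c w 0 = c. Proof. reflexivity. Qed.
Lemma stl_scons c w : stl (scons c w) = w. Proof. reflexivity. Qed.
Lemma hact_t b s x : Bool.eqb b (x 0) = true -> hact (b::s) x = scons (x 0) (hact s (stl x)).
Proof. intro E. simpl. rewrite E. reflexivity. Qed.
Lemma hact_f b s x : Bool.eqb b (x 0) = false -> hact (b::s) x = x.
Proof. intro E. simpl. rewrite E. reflexivity. Qed.
Lemma hact_nil x : hact [] x = scons (negb (x 0)) (stl x).
Proof. reflexivity. Qed.

Fixpoint conjl (i j : list bool) : list bool :=
  match i, j with
  | [a], b :: j' => if Bool.eqb a b then
                      (match j' with [] => j | c :: j'' => b :: negb c :: j'' end) else j
  | a :: i', b :: j' => if Bool.eqb a b then b :: conjl i' j' else j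
  | _, _ => j
  end.

Lemma hact_nil_conj c s w : hact [] (hact (c :: s) (hact [] w)) = hact (negb c :: s) w.
Proof.
  rewrite (hact_nil w). destruct (Bool.eqb c (negb (w 0))) eqn:E.
  - rewrite hact_t by (rewrite scons_0; auto). rewrite scons_0, stl_scons, hact_nil, scons_0.
    rewrite hact_t. rewrite negb_involutive. reflexivity.
    apply Bool.eqb_prop in E. subst. rewrite negb_involutive. apply eqb_reflx.
  - rewrite hact_f by (rewrite scons_0; auto). rewrite hact_nil, scons_0, stl_scons, negb_involutive.
    rewrite hact_f. apply scons_eta.
    destruct c, (w 0); simpl in *; auto.
Qed.

Lemma beqb_sym a b : Bool.eqb a b = Bool.eqb b a. Proof. destruct a, b; auto. Qed.
Lemma eqb_false_neq a b : Bool.eqb a b = false -> a <> b.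
Proof. destruct a, b; simpl; congruence. Qed.

Lemma hact_conj_l i : forall j x, i <> [] -> length i <= length j ->
  hact i (hact j (hact i x)) = hact (conjl i j) x.
Proof.
  induction i as [|a i IH]; intros j x Hi Hl. congruence.
  destruct j as [|b j]. simpl in Hl; lia.
  destruct (Bool.eqb a (x 0)) eqn:Ea.
  - apply Bool.eqb_prop in Ea. subst a.
    rewrite (hact_t (x 0) i x) by apply eqb_reflx.
    destruct (Bool.eqb b (x 0)) eqn:Eb.
    + apply Bool.eqb_prop in Eb. subst b.
      rewrite (hact_t (x 0) j) by (rewrite scons_0; apply eqb_reflx).
      rewrite scons_0, stl_scons.
      rewrite (hact_t (x 0) i) by (rewrite scons_0; apply eqb_reflx).
      rewrite scons_0, stl_scons.
      destruct i as [|c i].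
      * simpl conjl. rewrite eqb_reflx. destruct j as [|c j].
        -- rewrite hact_invol. rewrite (hact_t (x 0) _ x) by apply eqb_reflx. reflexivity.
        -- rewrite hact_nil_conj. rewrite (hact_t (x 0) _ x) by apply eqb_reflx. reflexivity.
      * change (conjl (x 0 :: c :: i) (x 0 :: j)) with
          (if Bool.eqb (x 0) (x 0) then x 0 :: conjl (c :: i) j else x 0 :: j).
        rewrite eqb_reflx. rewrite IH by (simpl in *; try congruence; lia).
        rewrite (hact_t (x 0) _ x) by apply eqb_reflx. reflexivity.
    + rewrite (hact_f b j) by (rewrite scons_0; auto).
      rewrite <- (hact_t (x 0) i x) by apply eqb_reflx. rewrite hact_invol.
      assert (conjl (x 0 :: i) (b :: j) = b :: j).
      { destruct i; simpl; rewrite (beqb_sym (x 0) b), Eb; auto. }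
      rewrite H, hact_f; auto.
  - rewrite (hact_f a i x) by auto.
    assert (Hh : hact (b :: j) x 0 = x 0) by (apply hact_head; congruence).
    rewrite hact_f by (rewrite Hh; auto).
    destruct (Bool.eqb a b) eqn:Eab.
    + apply Bool.eqb_prop in Eab. subst b.
      assert (exists t, conjl (a :: i) (a :: j) = a :: t) as [t Ht].
      { destruct i; simpl; rewrite eqb_reflx; eauto. destruct j; eauto. }
      rewrite Ht, !hact_f by auto. reflexivity.
    + assert (conjl (a :: i) (b :: j) = b :: j) as Ht.
      { destruct i; simpl; rewrite Eab; auto. }
      rewrite Ht. reflexivity.
Qed.

Lemma conjl_spec i : forall j, i <> [] -> length i <= length j ->
  ((length i < length j /\ firstn (length i) j = i) -> conjl i j = flip_at (length i) j) /\
  (~ (length i < length j /\ firstn (length i) j = i) -> conjl i j = j).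
Proof.
  induction i as [|a i IH]; intros j Hi Hl. congruence.
  destruct j as [|b j]. simpl in Hl; lia.
  destruct i as [|a' i].
  - simpl. destruct (Bool.eqb a b) eqn:E.
    + apply Bool.eqb_prop in E; subst. destruct j as [|c j]; simpl; split; intros H.
      * lia.
      * auto.
      * auto.
      * exfalso; apply H; split; [lia|auto].
    + apply eqb_false_neq in E. split; intros H; [|auto].
      destruct H as [_ H]. simpl in H. congruence.
  - assert (Hl' : length (a' :: i) <= length j) by (simpl in *; lia).
    destruct (IH j ltac:(congruence) Hl') as [IH1 IH2].
    change (conjl (a :: a' :: i) (b :: j)) with (if Bool.eqb a b then b :: conjl (a' :: i) j else b :: j).
    destruct (Bool.eqb a b) eqn:E.
    + apply Bool.eqb_prop in E; subst. split; intros H.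
      * destruct H as [H1 H2]. change (length (b :: a' :: i)) with (S (length (a' :: i))) in *.
        simpl flip_at. rewrite IH1; auto. split. simpl in *; lia.
        simpl in H2. injection H2. auto.
      * f_equal. apply IH2. intros [H1 H2]. apply H. split. simpl in *; lia.
        change (length (b :: a' :: i)) with (S (length (a' :: i))).
        change (firstn (S (length (a' :: i))) (b :: j)) with (b :: firstn (length (a' :: i)) j).
        rewrite H2. auto.
    + apply eqb_false_neq in E. split; intros H; [|auto].
      destruct H as [_ H]. simpl in H. congruence.
Qed.


Lemma st_exp2 (x : St) : x = scons (x 0) (scons (x 1) (stl (stl x))).
Proof. apply functional_extensionality. intros [|[|n]]; reflexivity. Qed.
Lemma st_exp3 (x : St) : x = scons (x 0) (scons (x 1) (scons (x 2) (stl (stl (stl x))))).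
Proof. apply functional_extensionality. intros [|[|[|n]]]; reflexivity. Qed.

Lemma mrel1 t x : gact false (hact (true::false::t) (gact false x)) = hact (false::t) x.
Proof. rewrite (st_exp2 x). generalize (x 0) (x 1) (stl (stl x)). intros a b w.
  destruct a, b; reflexivity. Qed.
Lemma mrel2 t x : gact false (hact (true::true::t) (gact false x)) = hact (true::true::t) x.
Proof. rewrite (st_exp2 x). generalize (x 0) (x 1) (stl (stl x)). intros a b w.
  destruct a, b; reflexivity. Qed.
Lemma mrel3 t x : gact true (hact (false::false::t) (gact true x)) = hact (false::false::t) x.
Proof. rewrite (st_exp2 x). generalize (x 0) (x 1) (stl (stl x)). intros a b w.
  destruct a, b; reflexivity. Qed.
Lemma mrel4 t x : gact true (hact (false::true::t) (gact true x)) = hact (true::t) x.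
Proof. rewrite (st_exp2 x). generalize (x 0) (x 1) (stl (stl x)). intros a b w.
  destruct a, b; reflexivity. Qed.
Lemma mrel5 j x : gact j (hact [negb j] (gact j (hact [negb j] (gact j (hact [negb j] x))))) = x.
Proof. rewrite (st_exp3 x). generalize (x 0) (x 1) (x 2) (stl (stl (stl x))). intros a b c w.
  destruct j, a, b, c; reflexivity. Qed.

Lemma model_rels : rels PG mh (mg false) (mg true).
Proof.
  unfold rels. split; [|split].
  - intros s _. apply perm_eq. intro x. simpl. apply hact_invol.
  - intros i j Hi Hl. split; intro H; apply perm_eq; intro x; simpl;
    rewrite hact_conj_l by auto; f_equal.
    apply (proj1 (conjl_spec i j Hi Hl)); auto.
    apply (proj2 (conjl_spec i j Hi Hl)); auto.
  - repeat split.
  + apply perm_eq. intro x. simpl. apply gact_invol.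
  + apply perm_eq. intro x. simpl. apply gact_invol.
  + apply perm_eq. intro x. simpl. apply (mrel5 false).
  + apply perm_eq. intro x. simpl. apply (mrel5 true).
  + intro t. apply perm_eq. intro x. simpl. apply mrel1.
  + intro t. apply perm_eq. intro x. simpl. apply mrel2.
  + intro t. apply perm_eq. intro x. simpl. apply mrel3.
  + intro t. apply perm_eq. intro x. simpl. apply mrel4.
Qed.


Lemma conjl_head a i b j : exists t, conjl (a :: i) (b :: j) = b :: t.
Proof.
  destruct i; simpl; destruct (Bool.eqb a b); eauto. destruct j; eauto.
Qed.

Lemma conjl_app v b u : v <> [] -> conjl v (v ++ b :: u) = v ++ negb b :: u.
Proof.
  induction v as [|a v IH]; intros H. congruence.
  destruct v as [|a' v].
  - simpl. rewrite eqb_reflx. reflexivity.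
  - change (conjl (a :: a' :: v) ((a :: a' :: v) ++ b :: u)) with
      (if Bool.eqb a a then a :: conjl (a' :: v) ((a' :: v) ++ b :: u) else a :: (a' :: v) ++ b :: u).
    rewrite eqb_reflx, IH by congruence. reflexivity.
Qed.

Lemma conjl_div v b c u u' : b <> c -> conjl (v ++ b :: u) (v ++ c :: u') = v ++ c :: u'.
Proof.
  intro Hbc. induction v as [|a v IH].
  - simpl. destruct u; simpl; replace (Bool.eqb b c) with false; auto;
    destruct b, c; simpl; congruence.
  - simpl app. destruct (v ++ b :: u) eqn:E. destruct v; discriminate.
    change (conjl (a :: b0 :: l) (a :: v ++ c :: u')) with
      (if Bool.eqb a a then a :: conjl (b0 :: l) (v ++ c :: u') else a :: v ++ c :: u').
    rewrite eqb_reflx, IH. reflexivity.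
Qed.

Lemma conjl_ne a i j : Bool.eqb a (hd true j) = false -> conjl (a :: i) j = j.
Proof. intro E. destruct j as [|b j]; [destruct i; reflexivity|]. simpl in E. destruct i; simpl; rewrite E; auto. Qed.

Section Alg.
Variables (Gm : Grp) (h : list bool -> Gm) (g0 g1 : Gm).
Hypothesis HR : rels Gm h g0 g1.
Local Notation "a * b" := (@gmul Gm a b).
Local Notation "1" := (@gone Gm).

Definition gj (j : bool) := if j then g1 else g0.
Definition Hv (v : list bool) := gen Gm (fun y => exists u, y = h (v ++ u)).

Lemma Rinv s : s <> [] -> h s * h s = 1.
Proof. apply HR. Qed.
Lemma hinv s : s <> [] -> ginv (h s) = h s.
Proof. intro; apply inv_invol, Rinv; auto. Qed.

Lemma RC s w : s <> [] -> length s <= length w -> h s * h w * h s = h (conjl s w).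
Proof.
  intros Hs Hl. destruct HR as [_ [HC _]]. destruct (HC s w Hs Hl) as [H1 H2].
  destruct (conjl_spec s w Hs Hl) as [C1 C2].
  destruct (classic (length s < length w /\ firstn (length s) w = s)) as [P|P].
  rewrite C1, H1; auto. rewrite C2, H2; auto.
Qed.

Lemma Rgg j : gj j * gj j = 1.
Proof. destruct HR as [_ [_ [A [B _]]]]. destruct j; auto. Qed.
Lemma ginv_gj j : ginv (gj j) = gj j.
Proof. apply inv_invol, Rgg. Qed.

Lemma RG1 j t : gj j * h (negb j :: j :: t) * gj j = h (j :: t).
Proof. destruct HR as [_ [_ [_ [_ [_ [_ [A [_ [_ B]]]]]]]]]. destruct j; simpl; auto. Qed.
Lemma RG2 j t : gj j * h (negb j :: negb j :: t) * gj j = h (negb j :: negb j :: t).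
Proof. destruct HR as [_ [_ [_ [_ [_ [_ [_ [A [B _]]]]]]]]]. destruct j; simpl; auto. Qed.
Lemma RG1' j t : gj j * h (j :: t) * gj j = h (negb j :: j :: t).
Proof.
  rewrite <- (RG1 j t). rewrite <- !mulA'. rewrite Rgg, mul1r.
  rewrite !mulA'. rewrite Rgg, mul1l. reflexivity.
Qed.
Lemma RG3 j : gj j * h [negb j] * gj j = h [negb j] * gj j * h [negb j].
Proof.
  destruct HR as [_ [_ [_ [_ [A [B _]]]]]].
  assert (E : (gj j * h [negb j]) * (gj j * h [negb j]) * (gj j * h [negb j]) = 1) by (destruct j; auto).
  set (a := gj j) in *. set (b := h [negb j]) in *.
  assert (Ha : a * a = 1) by apply Rgg. assert (Hb : b * b = 1) by (apply Rinv; congruence).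
  assert (E2 : (a*b*a) * (b*a*b) = 1) by (rewrite <- E; rewrite <- !mulA'; reflexivity).
  rewrite <- (inv_uniq _ _ _ E2). rewrite !inv_mul, !inv_invol by auto. symmetry; apply mulA'.
Qed.

Lemma conj_comp (p q y : Gm) : ginv (p * q) * y * (p * q) = ginv q * (ginv p * y * p) * q.
Proof. rewrite inv_mul. rewrite <- !mulA'. reflexivity. Qed.

Lemma conj_prod (P : Gm -> Prop) (S : Gm -> Prop) :
  (forall g y, S g -> P y -> P (ginv g * y * g)) ->
  forall l y, Forall S l -> P y -> P (ginv (prod Gm l) * y * prod Gm l).
Proof.
  intros H l. induction l as [|a l IH]; intros y F Py; simpl.
  - rewrite inv1, mul1l, mul1r. auto.
  - inversion F; subst. rewrite conj_comp. apply IH; auto.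
Qed.

Lemma hcomm_div v b c u u' : b <> c ->
  h (v ++ b :: u) * h (v ++ c :: u') = h (v ++ c :: u') * h (v ++ b :: u).
Proof.
  intro Hbc.
  assert (N1 : v ++ b :: u <> []) by (destruct v; discriminate).
  assert (N2 : v ++ c :: u' <> []) by (destruct v; discriminate).
  destruct (le_le_S_dec (length (v ++ b :: u)) (length (v ++ c :: u'))) as [L|L].
  - apply comm_of_conj. apply Rinv; auto. rewrite RC by auto. rewrite conjl_div; auto.
  - symmetry. apply comm_of_conj. apply Rinv; auto. rewrite RC by (auto; lia). rewrite conjl_div; auto.
Qed.

Lemma R1 v b u : v <> [] -> h v * h (v ++ b :: u) * h v = h (v ++ negb b :: u).
Proof. intro Hv. rewrite RC, conjl_app; auto. rewrite length_app; simpl; lia. Qed.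

Lemma gen_h_gen (v w : list bool) (y : Gm) : (exists t, w = v ++ t) -> Hv w y -> Hv v y.
Proof.
  intros [t Ht] H. subst. unfold Hv in *. revert H. apply gen_mono.
  intros z [u Hu]. apply gen_base. exists (t ++ u). subst. rewrite app_assoc. auto.
Qed.

Lemma Hv_conj_h j s y : s <> [] -> Hv [j] y -> Hv [j] (ginv (h s) * y * h s).
Proof.
  intros Hs. unfold Hv. apply conj_gen. intros z [u Hu]. subst z. rewrite hinv by auto.
  destruct (le_le_S_dec (length s) (length ([j] ++ u))) as [L|L].
  - rewrite RC by auto. destruct s as [|a s]. congruence.
    destruct (conjl_head a s j u) as [t Ht]. simpl app. rewrite Ht. apply gen_base. exists t. auto.
  - assert (E : h s * h ([j] ++ u) * h s = h ([j] ++ u) * (h ([j] ++ u) * h s * h ([j] ++ u)) * h s).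
    { rewrite <- !mulA'. rewrite (mulA' _ (h ([j] ++ u)) (h ([j] ++ u))), Rinv, mul1l by discriminate.
      reflexivity. }
    rewrite E, RC by (simpl in *; try discriminate; lia).
    destruct s as [|a s]. congruence.
    destruct (Bool.eqb j a) eqn:Eja.
    + apply Bool.eqb_prop in Eja. subst a.
      apply gen_mul. apply gen_mul. apply gen_base; eauto.
      simpl app. destruct (conjl_head j u j s) as [t Ht]. rewrite Ht. apply gen_base. exists t; auto.
      apply gen_base. exists s. auto.
    + simpl app. rewrite conjl_ne by auto. rewrite <- mulA', Rinv, mul1r by discriminate.
      apply gen_base. exists u. auto.
Qed.

Lemma Hsub_conj_Hj j l y : Hsub Gm h l -> Hv [j] y -> Hv [j] (ginv l * y * l).
Proof.
  intros Hl Hy. apply gen_list in Hl as [ls [F E]].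
  - subst l. apply (conj_prod (Hv [j]) (fun y => exists s, s <> [] /\ y = h s)); auto.
    intros g z [s [Hs Hg]] Hz. subst. apply Hv_conj_h; auto.
  - intros z [s [Hs Hz]]. subst. apply Rinv; auto.
Qed.

Definition Lj (j : bool) := gen Gm (fun y => exists s, s <> [] /\ s <> [negb j] /\ y = h s).

Lemma neq_negb a j : a <> j -> a = negb j.
Proof. destruct a, j; simpl; congruence. Qed.

Lemma lgen_lem j s : s <> [] -> s <> [negb j] -> gen Gm (fun y => exists s, s <> [] /\ s <> [negb j] /\ y = h s) (h s).
Proof. intros. apply gen_base. eauto. Qed.

Ltac lgen := apply lgen_lem;
  try discriminate; let EE := fresh in intro EE; injection EE; intros; subst;
  match goal with j : bool |- _ => destruct j; discriminate end.

Lemma Lj_conj_a j y : Lj j y -> Lj j (ginv (gj j) * y * gj j).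
Proof.
  unfold Lj. apply conj_gen. intros z [s [Hs [Hs' Hz]]]. subst z. rewrite ginv_gj.
  destruct s as [|a [|c t]]. congruence.
  - assert (a = j). { destruct (bool_dec a j); auto. apply neq_negb in n. subst. congruence. }
    subst. rewrite RG1'. lgen.
  - destruct (bool_dec a j) as [E|E].
    + subst. rewrite RG1'. lgen.
    + apply neq_negb in E. subst. destruct (bool_dec c j) as [E|E].
      * subst. rewrite RG1. lgen.
      * apply neq_negb in E. subst. rewrite RG2. lgen.
Qed.

Lemma Lj_conj_b j y : Lj j y -> Lj j (ginv (h [negb j]) * y * h [negb j]).
Proof.
  unfold Lj. apply conj_gen. intros z [s [Hs [Hs' Hz]]]. subst z. rewrite hinv by discriminate.
  destruct s as [|b s]. congruence.
  rewrite RC; [|discriminate|simpl; lia].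
  simpl conjl. destruct (Bool.eqb (negb j) b) eqn:E.
  - apply Bool.eqb_prop in E. subst b. destruct s as [|c s]. congruence.
    apply lgen_lem; discriminate.
  - apply lgen_lem; auto.
Qed.

Lemma Lj_Hsub j y : Lj j y -> Hsub Gm h y.
Proof. unfold Lj, Hsub. apply gen_mono. intros z [s [Hs [_ E]]]. apply gen_base. eauto. Qed.

Inductive W6 := We | Wa | Wb | Wab | Wba | Waba.
Definition wi (j : bool) (w : W6) : Gm :=
  let a := gj j in let b := h [negb j] in
  match w with We => 1 | Wa => a | Wb => b | Wab => a * b | Wba => b * a | Waba => a * b * a end.
Definition tA w := match w with We => Wa | Wa => We | Wb => Wab | Wab => Wb | Wba => Waba | Waba => Wba end.
Definition tB w := match w with We => Wb | Wa => Wba | Wb => We | Wab => Waba | Wba => Wa | Waba => Wab end.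

Lemma tA_spec j w : gj j * wi j w = wi j (tA w).
Proof.
  assert (Ha := Rgg j). assert (Hb : h [negb j] * h [negb j] = 1) by (apply Rinv; discriminate).
  destruct w; simpl; rewrite ?mulA', ?Ha, ?mul1l, ?mul1r; auto.
Qed.

Lemma tB_spec j w : h [negb j] * wi j w = wi j (tB w).
Proof.
  assert (Ha := Rgg j). assert (Hb : h [negb j] * h [negb j] = 1) by (apply Rinv; discriminate).
  destruct w; simpl; rewrite ?mulA', ?Hb, ?mul1l, ?mul1r; auto.
  - symmetry. apply RG3.
  - rewrite <- RG3, <- mulA', Ha, mul1r. auto.
Qed.

Lemma Gsub_decomp j x : Gsub Gm h g0 g1 j x -> exists l w, Lj j l /\ x = l * wi j w.
Proof.
  intro Hx. apply gen_list in Hx as [ls [F E]].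
  - subst x. induction F as [|g ls Hg F IH].
    + exists 1, We. split. apply gen_one. simpl. rewrite mul1r. auto.
    + destruct IH as [l [w [Hl E]]]. simpl. rewrite E.
      destruct Hg as [[s [Hs Hg]]|Hg].
      * destruct (list_eq_dec bool_dec s [negb j]) as [Es|Es].
        -- subst. exists (ginv (h [negb j]) * l * h [negb j]), (tB w). split. apply Lj_conj_b; auto.
           rewrite <- tB_spec, hinv by discriminate. rewrite <- !mulA'.
           rewrite (mulA' _ (h [negb j]) (h [negb j])), Rinv, mul1l by discriminate. auto.
        -- exists (g * l), w. split. apply gen_mul; auto. apply gen_base. subst; eauto. apply mulA'.
      * change (if j then g1 else g0) with (gj j) in Hg. subst g.
        exists (ginv (gj j) * l * gj j), (tA w). split. apply Lj_conj_a; auto.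
        rewrite <- tA_spec, ginv_gj. rewrite <- !mulA'.
        rewrite (mulA' _ (gj j) (gj j)), Rgg, mul1l. auto.
  - intros z [[s [Hs E]]|E]; subst. apply Rinv; auto. apply (Rgg j).
Qed.

Lemma Hv_base v u : Hv v (h (v ++ u)).
Proof. apply gen_base. eauto. Qed.

Lemma ca j y : Hv [j] y -> Hv [negb j; j] (ginv (gj j) * y * gj j).
Proof.
  apply conj_gen. intros z [u Hu]. subst. rewrite ginv_gj. simpl app. rewrite RG1'.
  apply (Hv_base [negb j; j] u).
Qed.
Lemma cb j y : Hv [negb j; j] y -> Hv [negb j; negb j] (ginv (h [negb j]) * y * h [negb j]).
Proof.
  apply conj_gen. intros z [u Hu]. subst. rewrite hinv by discriminate.
  change ([negb j; j] ++ u) with ([negb j] ++ j :: u). rewrite R1 by discriminate.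
  apply (Hv_base [negb j; negb j] u).
Qed.
Lemma ca3 j y : Hv [negb j; negb j] y -> Hv [negb j; negb j] (ginv (gj j) * y * gj j).
Proof.
  apply conj_gen. intros z [u Hu]. subst. rewrite ginv_gj. simpl app. rewrite RG2.
  apply (Hv_base [negb j; negb j] u).
Qed.

Lemma HvH v y : v <> [] -> Hv v y -> Hsub Gm h y.
Proof. intro Hv0. apply gen_mono. intros z [u Hu]. subst. apply gen_base. exists (v ++ u).
  split; auto. destruct v; [congruence|discriminate]. Qed.

Lemma A1 j x y : Gsub Gm h g0 g1 j x -> ~ Hsub Gm h x -> Hv [j] y -> Hv [negb j] (ginv x * y * x).
Proof.
  intros Hx Hn Hy. destruct (Gsub_decomp j x Hx) as [l [w [Hl E]]]. subst x.
  rewrite conj_comp. assert (Hy' := Hsub_conj_Hj j l y (Lj_Hsub _ _ Hl) Hy).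
  set (y' := ginv l * y * l) in *. clearbody y'.
  assert (Hb : Hsub Gm h (h [negb j])) by (apply gen_base; exists [negb j]; split; [discriminate|auto]).
  destruct w; simpl wi.
  - exfalso. apply Hn. rewrite mul1r. apply (Lj_Hsub _ _ Hl).
  - apply (gen_h_gen [negb j] [negb j; j]). exists [j]; auto. apply ca; auto.
  - exfalso. apply Hn. apply gen_mul; auto. apply (Lj_Hsub _ _ Hl).
  - rewrite conj_comp. apply (gen_h_gen [negb j] [negb j; negb j]). exists [negb j]; auto.
    apply cb, ca; auto.
  - rewrite conj_comp. apply (gen_h_gen [negb j] [negb j; j]). exists [j]; auto.
    apply ca. apply Hsub_conj_Hj; auto.
  - rewrite !conj_comp. apply (gen_h_gen [negb j] [negb j; negb j]). exists [negb j]; auto.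
    apply ca3, cb, ca; auto.
Qed.

Lemma A2 k : forall b t y, Talt Gm h g0 g1 b k t -> Hv [b] y -> Hsub Gm h (ginv t * y * t).
Proof.
  induction k as [|k IH]; intros b t y Ht Hy; simpl in Ht.
  - subst. rewrite inv1, mul1l, mul1r. apply (HvH [b]); auto. discriminate.
  - destruct Ht as [x [z [Hx [Hn [Hz E]]]]]. subst t. rewrite conj_comp.
    apply (IH (negb b)); auto. apply A1; auto.
Qed.

Lemma conj_back (g y : Gm) : g * (ginv g * y * g) * ginv g = y.
Proof. rewrite <- !mulA', mulVr, mul1r, mulKr. reflexivity. Qed.

Lemma Hsub_Gsub j y : Hsub Gm h y -> Gsub Gm h g0 g1 j y.
Proof. apply gen_mono. intros z Hz. apply gen_base. auto. Qed.

Lemma Hsub_inv_mul c x : Hsub Gm h c -> Hsub Gm h (c * x) -> Hsub Gm h x.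
Proof. intros H1 H2. replace x with (ginv c * (c * x)) by apply mulKl. apply gen_mul; auto. apply gen_inv; auto. Qed.

Lemma Talt_absorb c j k z : Hsub Gm h c -> Talt Gm h g0 g1 j (S k) z -> Talt Gm h g0 g1 j (S k) (c * z).
Proof.
  intros Hc [x [z' [Hx [Hn [Hz E]]]]]. subst z. exists (c * x), z'. repeat split; auto.
  apply gen_mul; auto. apply Hsub_Gsub; auto.
  intro H. apply Hn. apply (Hsub_inv_mul c); auto. apply mulA'.
Qed.

Lemma Talt0 b z : Talt Gm h g0 g1 b 0 z -> z = 1.
Proof. auto. Qed.

Hypothesis Hgb : forall b, ~ Hsub Gm h (gj b).

Definition Dprop (g : Gm) := Hsub Gm h g \/
  exists j k t a, Talt Gm h g0 g1 j (S k) t /\ Hsub Gm h a /\ g = t * a.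

Lemma Dec_all g : gen Gm (fun y => (exists s, s <> [] /\ y = h s) \/ y = g0 \/ y = g1) g -> Dprop g.
Proof.
  intro Hg. apply gen_list in Hg as [ls [F E]].
  2:{ intros z [[s [Hs E]]|[E|E]]; subst. apply Rinv; auto. apply (Rgg false). apply (Rgg true). }
  subst g. induction F as [|s ls Hs F IH]; simpl.
  - left. apply gen_one.
  - assert (Hs' : (exists u, u <> [] /\ s = h u) \/ exists b, s = gj b).
    { destruct Hs as [H|[H|H]]; [left; auto|right; exists false; auto|right; exists true; auto]. }
    clear Hs. destruct Hs' as [[u [Hu Es]]|[b Es]].
    + assert (Hsu : Hsub Gm h s) by (apply gen_base; subst; eauto).
      destruct IH as [IH|[j [k [t [a [Ht [Ha Eg]]]]]]].
      * left. apply gen_mul; auto.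
      * right. exists j, k, (s * t), a. split. apply Talt_absorb; auto. split; auto.
        rewrite Eg. apply mulA'.
    + assert (Gs : Gsub Gm h g0 g1 b s) by (apply gen_base; right; subst; destruct b; auto).
      destruct IH as [IH|[j [k [t [a [Ht [Ha Eg]]]]]]].
      * right. exists b, 0, (s * prod Gm ls), 1. split; [|split].
        -- exists (s * prod Gm ls), 1. split; [|split; [|split]]; auto.
           apply gen_mul; auto. apply Hsub_Gsub; auto.
           intro Hc. apply (Hgb b). rewrite <- Es. replace s with (s * prod Gm ls * ginv (prod Gm ls)).
           apply gen_mul; auto. apply gen_inv; auto. rewrite <- mulA', mulVr, mul1r. auto.
           all: try (simpl; rewrite ?mul1r; auto).
        -- apply gen_one.
        -- rewrite mul1r. auto.
      * rewrite Eg. destruct Ht as [x [z [Hx [Hn [Hz Et]]]]]. subst t.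
        destruct (bool_dec b j) as [Ebj|Ebj].
        -- subst b. destruct (classic (Hsub Gm h (s * x))) as [Hc|Hc].
           ++ destruct k as [|k].
              ** simpl in Hz. subst z. left. rewrite mul1r, mulA'. apply gen_mul; auto.
              ** right. exists (negb j), k, (s * x * z), a. split; [|split; auto].
                 apply Talt_absorb; auto. rewrite !mulA'. auto.
           ++ right. exists j, k, (s * x * z), a. split; [|split; auto].
              exists (s * x), z. repeat split; auto. apply gen_mul; auto.
              rewrite !mulA'; auto.
        -- right. exists b, (S k), (s * (x * z)), a. split; [|split; auto].
           exists s, (x * z). repeat split; auto. rewrite Es. apply Hgb.
           replace (negb b) with j by (destruct b, j; simpl; congruence).
           exists x, z. auto. apply mulA'.
Qed.

Lemma in_conj_of g y : Hsub Gm h (ginv g * y * g) -> in_conjH Gm h g y.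
Proof. intro H. exists (ginv g * y * g). split; auto. symmetry. apply conj_back. Qed.

Lemma Hsub_conj_closed g y : Hsub Gm h g -> Hsub Gm h y -> Hsub Gm h (ginv g * y * g).
Proof. intros. apply gen_mul; [apply gen_mul|]; auto. apply gen_inv; auto. Qed.

Lemma Hv_K j y : Hv [j] y -> K Gm h g0 g1 j y.
Proof.
  intros Hy k g Hg. apply in_conj_of. destruct k as [|k]; simpl in Hg.
  - apply Hsub_conj_closed; auto. apply (HvH [j]); auto. discriminate.
  - apply (A2 (S k) j); auto.
Qed.

Lemma K_Hsub j y : K Gm h g0 g1 j y -> Hsub Gm h y.
Proof.
  intro H. destruct (H 0 1 (gen_one _ _)) as [x [Hx E]].
  rewrite inv1, mul1r, mul1l in E. subst; auto.
Qed.

Lemma ker_K y : (forall g, gen Gm (fun y => (exists s, s <> [] /\ y = h s) \/ y = g0 \/ y = g1) g) ->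
  (kerG Gm h y <-> (K Gm h g0 g1 false y /\ K Gm h g0 g1 true y)).
Proof.
  intro Hgen. split.
  - intro H. split; intros k g _; apply H.
  - intros [K0 K1] g. destruct (Dec_all g (Hgen g)) as [Hg|[j [k [t [a [Ht [Ha E]]]]]]].
    + apply (K0 0 g Hg).
    + assert (Hc : in_conjH Gm h t y) by (destruct j; [apply (K1 (S k)) | apply (K0 (S k))]; auto).
      destruct Hc as [x [Hx Ex]]. subst g. exists (ginv a * x * a). split.
      apply Hsub_conj_closed; auto.
      rewrite Ex. rewrite inv_mul. rewrite <- !mulA', !mulKr. reflexivity.
Qed.

End Alg.


Fixpoint prefb (v : list bool) (x : St) : bool :=
  match v with [] => true | b :: v' => Bool.eqb b (x 0) && prefb v' (stl x) end.

Lemma hact_off v u x : prefb v x = false -> hact (v ++ u) x = x.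
Proof.
  revert x; induction v as [|b v IH]; intros x H; simpl in H. discriminate.
  destruct (Bool.eqb b (x 0)) eqn:E; simpl in H.
  - simpl app. rewrite hact_t by auto. rewrite IH by auto. apply scons_eta.
  - simpl app. apply hact_f; auto.
Qed.

Lemma hact_pref v u x : prefb v (hact (v ++ u) x) = prefb v x.
Proof.
  revert x; induction v as [|b v IH]; intros x. reflexivity.
  change ((b :: v) ++ u) with (b :: (v ++ u)).
  destruct (Bool.eqb b (x 0)) eqn:E.
  - rewrite hact_t by auto. change (prefb (b :: v) ?z) with (Bool.eqb b (z 0) && prefb v (stl z)).
    rewrite scons_0, stl_scons, IH, E. auto.
  - rewrite hact_f by auto. auto.
Qed.

Lemma prefb_snoc v b x : prefb (v ++ [b]) x = prefb v x && Bool.eqb b (x (length v)).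
Proof.
  revert x; induction v as [|c v IH]; intros x; simpl. destruct (Bool.eqb b (x 0)); auto.
  rewrite IH. unfold stl. rewrite andb_assoc. auto.
Qed.

Lemma hact_flip v x : prefb v x = true -> hact v x (length v) = negb (x (length v)).
Proof.
  revert x; induction v as [|b v IH]; intros x H. reflexivity.
  change (prefb (b::v) x) with (Bool.eqb b (x 0) && prefb v (stl x)) in H.
  apply andb_prop in H as [H1 H2]. rewrite hact_t by auto. change (length (b::v)) with (S (length v)).
  change (scons (x 0) (hact v (stl x)) (S (length v))) with (hact v (stl x) (length v)).
  rewrite IH; auto.
Qed.

Definition mk (l : list bool) : St := fun k => nth k l false.
Lemma prefb_mk l w : prefb l (fun k => nth k (l ++ w) false) = true.
Proof.
  revert w; induction l as [|b l IH]; intros w; simpl. auto.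
  rewrite eqb_reflx. simpl. apply (IH w).
Qed.

Section Model.
Variables (Gm : Grp) (h : list bool -> Gm) (g0 g1 : Gm).
Hypothesis HR : rels Gm h g0 g1.
Variable f : Gm -> PG.
Hypothesis fM : forall a b, f (gmul a b) = gmul (f a) (f b).
Hypothesis fH : forall s, s <> [] -> f (h s) = mh s.
Hypothesis fg0 : f g0 = mg false.
Hypothesis fg1 : f g1 = mg true.
Local Notation "a * b" := (@gmul Gm a b).
Local Notation "1" := (@gone Gm).

Definition FW (y : Gm) (x : St) : St := fw (f y) x.

Lemma FW_mul a b x : FW (a * b) x = FW a (FW b x).
Proof. unfold FW. rewrite fM. reflexivity. Qed.

Lemma f_one : f 1 = gone.
Proof.
  apply (mul_cancel_l PG (f 1)). rewrite <- fM, (mul1l Gm), mul1r. reflexivity.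
Qed.
Lemma FW_one x : FW 1 x = x.
Proof. unfold FW. rewrite f_one. reflexivity. Qed.

Lemma f_inv a : f (ginv a) = ginv (f a).
Proof.
  assert (E : gmul (f (ginv a)) (f a) = gone) by (rewrite <- fM, mulVl; apply f_one).
  apply inv_uniq in E. rewrite <- E, invinv. reflexivity.
Qed.

Lemma FW_h s x : s <> [] -> FW (h s) x = hact s x.
Proof. intro. unfold FW. rewrite fH; auto. Qed.
Lemma FW_g j x : FW (gj Gm g0 g1 j) x = gact j x.
Proof. unfold FW, gj. destruct j; [rewrite fg1|rewrite fg0]; reflexivity. Qed.

Lemma FW_prod_h (P : St -> Prop) l :
  Forall (fun g => exists s, s <> [] /\ g = h s) l ->
  (forall s x, s <> [] -> P x -> P (hact s x)) -> forall x, P x -> P (FW (prod Gm l) x).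
Proof.
  intros F HP. induction F as [|g l [s [Hs E]] F IH]; intros x Px; simpl.
  - rewrite FW_one; auto.
  - rewrite FW_mul. subst g. rewrite FW_h by auto. apply HP; auto.
Qed.

Lemma Hsub_head y x : Hsub Gm h y -> FW y x 0 = x 0.
Proof.
  intro Hy. apply gen_list in Hy as [l [F E]].
  - subst y. apply (FW_prod_h (fun z => z 0 = x 0)); auto. intros s z Hs Hz. rewrite hact_head; auto.
  - intros z [s [Hs E]]. subst. apply (Rinv Gm h g0 g1 HR); auto.
Qed.

Lemma gj_not_H j : ~ Hsub Gm h (gj Gm g0 g1 j).
Proof.
  intro H. set (x := fun n : nat => match n with 0 => negb j | 1 => j | _ => false end).
  assert (E := Hsub_head _ x H). rewrite FW_g in E. unfold gact in E. subst x. simpl in E.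
  destruct j; simpl in E; discriminate.
Qed.

Definition Hn (n : nat) (v : list bool) (y : Gm) : Prop :=
  exists l, Forall (fun g => exists u, length u < n /\ g = h (v ++ u)) l /\ y = prod Gm l.

Lemma Hn_props n v y : v <> [] -> Hn n v y ->
  (forall x, prefb v x = false -> FW y x = x) /\ (forall x, prefb v (FW y x) = prefb v x).
Proof.
  intros Hv [l [F E]]. subst y. induction F as [|g l [u [Hu Eg]] F IH].
  - simpl. split; intros; rewrite FW_one; auto.
  - destruct IH as [I1 I2]. simpl. subst g.
    assert (Hn0 : v ++ u <> []) by (destruct v; [congruence|discriminate]).
    split; intros x; rewrite FW_mul, FW_h by auto.
    + intro Hx. rewrite I1 by auto. apply hact_off; auto.
    + rewrite hact_pref. auto.
Qed.

Lemma Hn_nil v : Hn 0 v 1 \/ True.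
Proof. right; auto. Qed.

Lemma Hn_one n v : Hn n v 1.
Proof. exists []. split; auto. Qed.

Lemma Hn_cons n v g y : (exists u, length u < n /\ g = h (v ++ u)) -> Hn n v y -> Hn n v (g * y).
Proof. intros Hg [l [F E]]. exists (g :: l). split; auto. subst; auto. Qed.

Lemma hv_swap v g R : v <> [] -> g * (h v * R) = h v * ((h v * g * h v) * R).
Proof.
  intro Hv. rewrite !mulA'. f_equal. rewrite (Rinv Gm h g0 g1 HR) by auto. rewrite mul1l. auto.
Qed.

Lemma comm_Hn n v u y : Hn n (v ++ [false]) y ->
  h (v ++ true :: u) * y = y * h (v ++ true :: u).
Proof.
  intros [l [F E]]. subst y. apply comm_prod. eapply Forall_impl; [|exact F].
  intros g [u' [_ Eg]]. subst g. rewrite <- app_assoc. simpl. apply (hcomm_div Gm h g0 g1 HR). discriminate.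
Qed.

Lemma Hn_decomp n v y : v <> [] -> Hn (S n) v y -> exists (e : bool) y0 y1,
  y = (if e then h v else 1) * (y0 * y1) /\ Hn n (v ++ [false]) y0 /\ Hn n (v ++ [true]) y1.
Proof.
  intros Hv [l [F E]]. subst y. induction F as [|g l [u [Hu Eg]] F IH].
  - exists false, 1, 1. split. simpl. rewrite !mul1l. auto. split; apply Hn_one.
  - destruct IH as [e [y0 [y1 [E [H0 H1]]]]]. simpl. rewrite E. subst g.
    destruct u as [|b u].
    + rewrite app_nil_r. exists (negb e), y0, y1. split; auto. destruct e; simpl.
      * rewrite mulA', (Rinv Gm h g0 g1 HR), mul1l by auto. auto.
      * rewrite mul1l. auto.
    + simpl in Hu. assert (Hu' : length u < n) by lia.
      assert (C0 : Hn n (v ++ [false]) (h (v ++ false :: u) * y0)).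
      { apply Hn_cons; auto. exists u; rewrite <- app_assoc; auto. }
      assert (C1 : Hn n (v ++ [true]) (h (v ++ true :: u) * y1)).
      { apply Hn_cons; auto. exists u; rewrite <- app_assoc; auto. }
      destruct b, e.
      * rewrite hv_swap by auto. rewrite (R1 Gm h g0 g1 HR) by auto. simpl negb.
        exists true, (h (v ++ false :: u) * y0), y1. split; [|split; auto].
        rewrite <- !mulA'. auto.
      * exists false, y0, (h (v ++ true :: u) * y1). split; [|split; auto].
        rewrite !mul1l, mulA', (comm_Hn n v u y0 H0), <- mulA'. reflexivity.
      * rewrite hv_swap by auto. rewrite (R1 Gm h g0 g1 HR) by auto. simpl negb.
        exists true, y0, (h (v ++ true :: u) * y1). split; [|split; auto]. f_equal.
        rewrite mulA', (comm_Hn n v u y0 H0), <- mulA'. reflexivity.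
      * exists false, (h (v ++ false :: u) * y0), y1. split; [|split; auto].
        rewrite <- !mulA'. rewrite !mul1l. auto.
Qed.

Lemma ps1 v b x : prefb (v ++ [b]) x = true -> prefb v x = true /\ x (length v) = b.
Proof. rewrite prefb_snoc. intro H. apply andb_prop in H as [H1 H2]. apply Bool.eqb_prop in H2. auto. Qed.
Lemma ps3 v b x : x (length v) = b -> prefb (v ++ [negb b]) x = false.
Proof. intro H. rewrite prefb_snoc, H. destruct b; simpl; rewrite andb_false_r; auto. Qed.

Lemma Hn0 v y : Hn 0 v y -> y = 1.
Proof. intros [l [F E]]. destruct F as [|g l [u [Hu _]] _]. auto. lia. Qed.

Lemma faith n : forall v y, v <> [] -> Hn n v y -> (forall x, prefb v x = true -> FW y x = x) -> y = 1.
Proof.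
  induction n as [|n IH]; intros v y Hv Hy Hfix. apply (Hn0 v); auto.
  destruct (Hn_decomp n v y Hv Hy) as [e [y0 [y1 [E [H0 H1]]]]].
  assert (Nv0 : v ++ [false] <> []) by (destruct v; discriminate).
  assert (Nv1 : v ++ [true] <> []) by (destruct v; discriminate).
  destruct (Hn_props n _ _ Nv0 H0) as [P0a P0b].
  destruct (Hn_props n _ _ Nv1 H1) as [P1a P1b].
  destruct e.
  - exfalso. set (x := fun k => nth k ((v ++ [false]) ++ []) false).
    assert (Px : prefb (v ++ [false]) x = true) by apply prefb_mk.
    destruct (ps1 _ _ _ Px) as [Pv Pl].
    assert (E1 : FW y1 x = x) by (apply P1a; apply (ps3 v false); auto).
    assert (Hx := Hfix x Pv). rewrite E, !FW_mul, E1, FW_h in Hx by auto.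
    set (x' := FW y0 x) in *.
    assert (Px' : prefb (v ++ [false]) x' = true) by (unfold x'; rewrite P0b; auto).
    destruct (ps1 _ _ _ Px') as [Pv' Pl'].
    assert (F1 : prefb (v ++ [negb true]) (hact v x') = false).
    { apply ps3. rewrite hact_flip, Pl'; auto. }
    rewrite Hx in F1. simpl negb in F1. congruence.
  - assert (Ey0 : y0 = 1).
    { apply (IH (v ++ [false])); auto. intros x Px. destruct (ps1 _ _ _ Px) as [Pv Pl].
      assert (E1 : FW y1 x = x) by (apply P1a; apply (ps3 v false); auto).
      assert (Hx := Hfix x Pv). rewrite E, !FW_mul, FW_one, E1 in Hx. auto. }
    subst y0. assert (Ey1 : y1 = 1).
    { apply (IH (v ++ [true])); auto. intros x Px. destruct (ps1 _ _ _ Px) as [Pv Pl].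
      assert (Hx := Hfix x Pv). rewrite E, !FW_mul, !FW_one in Hx. auto. }
    subst. rewrite !mul1l. auto.
Qed.

Lemma Hv_Hn v y : v <> [] -> Hv Gm h v y -> exists n, Hn n v y.
Proof.
  intros Hv0 Hy. apply gen_list in Hy as [l [F E]].
  - subst y. assert (exists n, Forall (fun g => exists u, length u < n /\ g = h (v ++ u)) l) as [n Fn].
    { induction F as [|g l [u Hu] F IH]. exists 0; constructor.
      destruct IH as [n Fn]. exists (Nat.max n (S (length u))). constructor.
      exists u; split; [lia|auto]. eapply Forall_impl; [|exact Fn].
      intros g' [u' [H1 H2]]. exists u'; split; [lia|auto]. }
    exists n, l. auto.
  - intros z [u Hu]. subst. apply (Rinv Gm h g0 g1 HR). destruct v; [congruence|discriminate].
Qed.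

Lemma Hv_props v y : v <> [] -> Hv Gm h v y ->
  (forall x, prefb v x = false -> FW y x = x) /\ (forall x, prefb v (FW y x) = prefb v x).
Proof. intros Hv0 Hy. destruct (Hv_Hn v y Hv0 Hy) as [n Hn']. apply (Hn_props n); auto. Qed.

Lemma faithv v y : v <> [] -> Hv Gm h v y -> (forall x, prefb v x = true -> FW y x = x) -> y = 1.
Proof. intros Hv0 Hy. destruct (Hv_Hn v y Hv0 Hy) as [n Hn']. apply (faith n); auto. Qed.

Lemma inter_trivial y : Hv Gm h [false] y -> Hv Gm h [true] y -> y = 1.
Proof.
  intros H0 H1. apply (faithv [false]); auto. discriminate.
  intros x Px. apply (proj1 (Hv_props [true] y ltac:(discriminate) H1)).
  simpl in *. destruct (x 0); simpl in *; auto.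
Qed.

Definition BW (y : Gm) (x : St) : St := bw (f y) x.
Lemma BW_mul a b x : BW (a * b) x = BW b (BW a x).
Proof. unfold BW. rewrite fM. reflexivity. Qed.
Lemma BW_h s x : s <> [] -> BW (h s) x = hact s x.
Proof. intro. unfold BW. rewrite fH; auto. Qed.
Lemma BW_g j x : BW (gj Gm g0 g1 j) x = gact j x.
Proof. unfold BW, gj. destruct j; [rewrite fg1|rewrite fg0]; reflexivity. Qed.
Lemma FW_inv t x : FW (ginv t) x = BW t x.
Proof. unfold FW, BW. rewrite f_inv. reflexivity. Qed.
Lemma FW_BW t x : FW t (BW t x) = x.
Proof. apply fb. Qed.

Definition x0e (j c : bool) : Gm :=
  if Bool.eqb c j then gj Gm g0 g1 j else h [negb j] * gj Gm g0 g1 j * h [negb j].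

Lemma x0e_BW j c w : BW (x0e j c) (scons (negb j) (scons c w)) = scons j w.
Proof.
  unfold x0e. destruct (Bool.eqb c j) eqn:E.
  - apply Bool.eqb_prop in E. subst. rewrite BW_g. match goal with b : bool |- _ => destruct b end; reflexivity.
  - rewrite !BW_mul, !BW_h by discriminate. rewrite BW_g.
    destruct j, c; simpl in E; try discriminate; reflexivity.
Qed.

Lemma x0e_G j c : Gsub Gm h g0 g1 j (x0e j c).
Proof.
  assert (Gg : Gsub Gm h g0 g1 j (gj Gm g0 g1 j)) by (apply gen_base; right; destruct j; auto).
  assert (Gh : Gsub Gm h g0 g1 j (h [negb j])) by (apply gen_base; left; exists [negb j]; split; [discriminate|auto]).
  unfold x0e. destruct (Bool.eqb c j); auto. repeat apply gen_mul; auto.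
Qed.

Lemma x0e_nH j c : ~ Hsub Gm h (x0e j c).
Proof.
  intro H. unfold x0e in H. destruct (Bool.eqb c j) eqn:Ec.
  - set (x := scons (negb j) (scons j (fun _ => false))).
    assert (E := Hsub_head _ x H). rewrite FW_g in E. subst x. destruct j; compute in E; discriminate.
  - set (x := scons (negb j) (scons (negb j) (fun _ => false))).
    assert (E := Hsub_head _ x H).
    rewrite !FW_mul, !FW_h in E by discriminate. rewrite FW_g in E. subst x. destruct j; compute in E; discriminate.
Qed.

Lemma nav q : forall j, exists k t, Talt Gm h g0 g1 j (S k) t /\
  forall x, prefb (negb j :: q) x = true -> BW t x 0 = x (S (length q)).
Proof.
  induction q as [|c q IH]; intro j.
  - exists 0, (gj Gm g0 g1 j * 1). split.
    + exists (gj Gm g0 g1 j), 1. repeat split; auto. apply gen_base; right; destruct j; auto.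
      apply gj_not_H.
    + intros x Px. rewrite BW_mul, BW_g. unfold BW. rewrite f_one. simpl.
      simpl in Px. rewrite andb_true_r in Px. apply Bool.eqb_prop in Px.
      rewrite (st_exp2 x). rewrite <- Px. generalize (x (S 0)) (stl (stl x)). intros b w.
      destruct j, b; reflexivity.
  - destruct (IH (negb j)) as [k [t [Ht Hnav]]]. rewrite negb_involutive in Hnav.
    exists (S k), (x0e j c * t). split.
    + exists (x0e j c), t. repeat split; auto. apply x0e_G. apply x0e_nH.
    + intros x Px. rewrite BW_mul.
      simpl in Px. apply andb_prop in Px as [P1 P2]. apply Bool.eqb_prop in P1.
      apply andb_prop in P2 as [P2 P3]. apply Bool.eqb_prop in P2.
      rewrite (st_exp2 x) at 1. rewrite <- P1. change (x (S 0)) with (stl x 0). rewrite <- P2.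
      rewrite x0e_BW. rewrite Hnav. reflexivity.
      simpl. rewrite eqb_reflx. simpl. auto.
Qed.

Lemma Hsub_split j y : Hsub Gm h y -> exists a b, Hv Gm h [j] a /\ Hv Gm h [negb j] b /\ y = a * b.
Proof.
  intro Hy. apply gen_list in Hy as [l [F E]].
  2:{ intros z [s [Hs E]]. subst. apply (Rinv Gm h g0 g1 HR); auto. }
  subst y. assert (exists la lb, Forall (fun g => exists u, g = h ([j] ++ u)) la /\
     Forall (fun g => exists u, g = h ([negb j] ++ u)) lb /\ prod Gm l = prod Gm la * prod Gm lb)
     as [la [lb [Fa [Fb E]]]].
  { induction F as [|g l [s [Hs Eg]] F IH].
    - exists [], []. simpl. rewrite mul1l. auto.
    - destruct IH as [la [lb [Fa [Fb E]]]]. subst g. destruct s as [|c s]. congruence.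
      simpl. rewrite E. destruct (bool_dec c j) as [Ec|Ec].
      + subst c. exists (h (j :: s) :: la), lb. split; [|split]; [constructor; eauto|auto|].
        simpl. apply mulA'.
      + apply neq_negb in Ec. subst. exists la, (h (negb j :: s) :: lb). split; [|split]; [auto|constructor; eauto|].
        simpl. rewrite mulA', (comm_prod Gm (h (negb j :: s)) la), <- mulA'. auto.
        eapply Forall_impl; [|exact Fa]. intros g [u Eg]. subst.
        apply (hcomm_div Gm h g0 g1 HR [] (negb j) j). destruct j; discriminate. }
  exists (prod Gm la), (prod Gm lb). repeat split; auto; apply list_gen; auto.
Qed.

Fixpoint takeS (n : nat) (x : St) : list bool :=
  match n with 0 => [] | S m => x 0 :: takeS m (stl x) end.
Lemma takeS_len n x : length (takeS n x) = n.
Proof. revert x; induction n; intros; simpl; auto. Qed.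
Lemma takeS_pref n x z : (forall k, k < n -> z k = x k) -> prefb (takeS n x) z = true.
Proof.
  revert x z; induction n as [|n IH]; intros x z H; simpl. auto.
  rewrite H by lia. rewrite eqb_reflx. simpl. apply IH. intros k Hk. unfold stl. apply H. lia.
Qed.

Lemma least_diff (x z : St) : x <> z -> exists i, x i <> z i /\ forall k, k < i -> x k = z k.
Proof.
  intro Hxz. assert (exists i, x i <> z i) as [i0 Hi0].
  { apply NNPP. intro N. apply Hxz. apply functional_extensionality. intro i.
    apply NNPP. intro Ni. apply N. eauto. }
  assert (forall n, (exists i, i <= n /\ x i <> z i) -> exists i, x i <> z i /\ forall k, k < i -> x k = z k).
  { induction n as [|n IH]; intros [i [Hi Hd]].
    - exists 0. split. replace 0 with i by lia. auto. intros; lia.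
    - destruct (classic (exists i, i <= n /\ x i <> z i)) as [C|C]. auto.
      exists i. split; auto. intros k Hk. apply NNPP. intro Nk. apply C. exists k. split; auto. lia. }
  apply (H i0). eauto.
Qed.

Lemma K_Hv j y : K Gm h g0 g1 j y -> Hv Gm h [j] y.
Proof.
  intro HK. assert (Hy : Hsub Gm h y) by (eapply K_Hsub; eauto).
  destruct (Hsub_split j y Hy) as [a [b [Ha [Hb E]]]].
  assert (NB : [negb j] <> []) by discriminate.
  destruct (Hv_props _ _ NB Hb) as [Pb1 Pb2].
  destruct (classic (forall x, FW b x = x)) as [C|C].
  - assert (b = 1) by (apply (faithv [negb j]); auto). subst. rewrite mul1r. auto.
  - exfalso. apply not_all_ex_not in C as [x Cx].
    destruct (least_diff x (FW b x)) as [i [Hi Hlt]]; auto.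
    assert (Hh : FW b x 0 = x 0) by (apply Hsub_head; apply (HvH Gm h [negb j]); auto).
    destruct i as [|m]. congruence.
    assert (X0 : x 0 = negb j).
    { destruct (bool_dec (x 0) (negb j)); auto. exfalso. apply Cx. apply Pb1.
      simpl. destruct (x 0), j; simpl in *; congruence. }
    set (q := takeS m (stl x)).
    assert (Pq : forall w, (forall k, k < S m -> w k = x k) -> prefb (negb j :: q) w = true).
    { intros w Hw. simpl. rewrite Hw, X0, eqb_reflx by lia. simpl. apply takeS_pref.
      intros k Hk. unfold stl. apply Hw. lia. }
    destruct (nav q j) as [k [t [Ht Hnav]]].
    assert (Lq : length q = m) by apply takeS_len.
    assert (N1 := Hnav x (Pq x ltac:(auto))).
    assert (N2 := Hnav (FW b x) (Pq (FW b x) ltac:(intros; symmetry; apply Hlt; auto))).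
    rewrite Lq in N1, N2.
    destruct (HK (S k) t Ht) as [w [Hw Ew]].
    assert (Hat := A2 Gm h g0 g1 HR (S k) j t a Ht Ha).
    assert (Hc : Hsub Gm h (ginv t * b * t)).
    { replace (ginv t * b * t) with (ginv (ginv t * a * t) * w).
      apply gen_mul; auto. apply gen_inv; auto.
      replace b with (ginv a * y) by (rewrite E; apply mulKl). rewrite Ew.
      rewrite !inv_mul, invinv. rewrite <- !mulA'. rewrite mulVl, mul1r. reflexivity. }
    assert (Hd := Hsub_head _ (BW t x) Hc).
    rewrite !FW_mul, FW_BW, FW_inv in Hd. congruence.
Qed.

End Model.


Theorem lemma4p3 (Gm : Grp) (h : list bool -> Gm) (g0 g1 : Gm) :
  is_presented Gm h g0 g1 ->
  (forall y, K Gm h g0 g1 false y <-> Hj Gm h false y) /\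
  (forall y, K Gm h g0 g1 true y <-> Hj Gm h true y) /\
  (forall y, kerG Gm h y <-> (K Gm h g0 g1 false y /\ K Gm h g0 g1 true y)) /\
  (forall y, (Hj Gm h false y /\ Hj Gm h true y) <-> y = gone) /\
  (forall y, kerG Gm h y <-> y = gone).
Proof.
  intros [HR [Hgen Huniv]].
  destruct (Huniv PG mh (mg false) (mg true) model_rels) as [f [fM [fH [f0 f1]]]].
  assert (Hgb : forall b, ~ Hsub Gm h (gj Gm g0 g1 b)) by (intro b; apply (gj_not_H Gm h g0 g1 HR f fM fH f0 f1)).
  assert (KH : forall j y, K Gm h g0 g1 j y <-> Hj Gm h j y).
  { intros j y. split; intro H.
    - apply (K_Hv Gm h g0 g1 HR f fM fH f0 f1); auto.
    - apply (Hv_K Gm h g0 g1 HR); auto. }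
  assert (KER : forall y, kerG Gm h y <-> (K Gm h g0 g1 false y /\ K Gm h g0 g1 true y)).
  { intro y. apply (ker_K Gm h g0 g1 HR Hgb); auto. }
  assert (INT : forall y, (Hj Gm h false y /\ Hj Gm h true y) <-> y = gone).
  { intro y. split.
    - intros [A B]. eapply inter_trivial; eauto.
    - intro E. subst. split; apply gen_one. }
  split; [|split; [|split; [|split]]]; auto.
  intro y. rewrite KER, KH, KH. apply INT.
Qed.
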